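(* If $\alpha$ is irrational with partial quotients bounded in average, then $|A_\alpha\cap[n]|\gg\sqrt{n/\log n}$ as $n\to\infty$ (implicit constant depending on $\alpha$).
   Context: $[n]=\{1,\dots,n\}$; $\{x\}$ is the fractional part of $x$. For irrational $\alpha$ and $k\ge1$, $B_\alpha(k)=|\{1\le q\le k:\{q\alpha\}\le\{k\alpha\}\}|$, and $A_\alpha=\{B_\alpha(k):k\ge1\}$. If $\alpha=[a_0;a_1,a_2,\dots]$, its partial quotients are bounded in average if there is $B$ with $a_1+\dots+a_m\le Bm$ for all $m\ge1$. *)

(* Defs.v *)
From HB Require Import structures.
From mathcomp Require Import all_boot all_order all_algebra.
From mathcomp Require Import all_classical all_reals all_analysis.
Set Implicit Arguments. Unset Strict Implicit. Unset Printing Implicit Defensive.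
Import Order.TTheory GRing.Theory Num.Theory.
Local Open Scope ring_scope.

Section Defs.
Variable R : realType.

Definition frac (x : R) : R := x - (Num.floor x)%:~R.

Fixpoint cf_x (alpha : R) (k : nat) : R :=
  match k with
  | 0 => alpha
  | k'.+1 => (frac (cf_x alpha k'))^-1
  end.

Definition pq (alpha : R) (k : nat) : int := Num.floor (cf_x alpha k).

Definition pq_bounded_in_average (alpha : R) : Prop :=
  exists B : R, forall m : nat, (1 <= m)%N ->
    \sum_(1 <= i < m.+1) (pq alpha i)%:~R <= B * m%:R.

Definition Bal (alpha : R) (k : nat) : nat :=
  count (fun q : nat => frac (q%:R * alpha) <= frac (k%:R * alpha)) (iota 1 k).

Definition inA (alpha : R) (m : nat) : Prop :=
  exists k : nat, (1 <= k)%N /\ Bal alpha k = m.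

Definition cardA_upto (alpha : R) (n : nat) : nat :=
  #|[set m : 'I_n.+1 | (0 < val m)%N && `[< inA alpha (val m) >]]|.

End Defs.

(* Main.v *)
Require Import Defs.
From HB Require Import structures.
From mathcomp Require Import all_boot all_order all_algebra.
From mathcomp Require Import all_classical all_reals all_analysis.
From mathcomp Require Import ring lra zify.
Import Order.TTheory GRing.Theory Num.Theory.
Local Open Scope ring_scope.
Set Implicit Arguments. Unset Strict Implicit.

Lemma ring_aux1 (R : realType) (alpha A B C D E F : R) : (A * B + C) * alpha -
  (A * (B * alpha - -1 * (-1 * F) * E) + (C * alpha - -1 * F * D)) =
  -1 * (-1 * (-1 * F)) * (D - A * E).
Proof. ring. Qed.

Lemma ring_aux2 (R : realType) (A B C D E : R) :
  (A * B + C) * E + B * (D - A * E) = B * D + C * E.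
Proof. ring. Qed.

Section CF.
Variable R : realType.
Implicit Types x : R.
Local Notation frac := (@Defs.frac R).

Lemma frac_ge0 x : 0 <= frac x.
Proof. by rewrite /frac subr_ge0 Num.Theory.floor_le. Qed.

Lemma frac_lt1 x : frac x < 1.
Proof. have := Num.Theory.floorD1_gt x; rewrite /Defs.frac intrD => H. by rewrite ltrBlDr addrC. Qed.

Lemma ratr_rational x (q : rat) : ratr q = x -> rational x.
Proof. by move=> <-; exists q. Qed.

Variable alpha : R.
Hypothesis irr : irrational alpha.

Local Notation x := (cf_x alpha).
Local Notation a := (pq alpha).

Lemma rat_back k : rational (x k) -> rational alpha.
Proof.
elim: k => [//|k IH] /= [q _ Hq]; apply: IH.
have H : frac (x k) = ratr q^-1 by rewrite fmorphV /= Hq invrK.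
apply: (@ratr_rational _ (q^-1 + (Num.floor (x k))%:~R)).
by rewrite rmorphD /= -H ratr_int /frac subrK.
Qed.

Lemma frac_neq0 k : frac (x k) != 0.
Proof.
apply/eqP => H; apply: irr; apply: (@rat_back k).
apply: (@ratr_rational _ (Num.floor (x k))%:~R).
by rewrite ratr_int; move: H; rewrite /Defs.frac => /eqP; rewrite subr_eq0 => /eqP.
Qed.

Lemma frac_gt0 k : 0 < frac (x k).
Proof. by rewrite lt_def frac_neq0 frac_ge0. Qed.

Lemma xS k : x k.+1 = (frac (x k))^-1. Proof. by []. Qed.

Lemma x_gt1 k : 1 < x k.+1.
Proof. by rewrite xS invf_gt1 ?frac_gt0 ?frac_lt1. Qed.

Lemma a_ge1 k : 1 <= a k.+1.
Proof. by rewrite /pq Num.Theory.floor_ge_int ltW ?x_gt1. Qed.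

Lemma fracx k : frac (x k) = (x k.+1)^-1.
Proof. by rewrite xS invrK. Qed.


Fixpoint Q2 (n : nat) : nat * nat :=
  match n with 0 => (0%N, 1%N) | n'.+1 => let u := Q2 n' in (u.2, `|a n'.+1| * u.2 + u.1)%N end.
Definition Q n := (Q2 n).1.
Fixpoint P2 (n : nat) : int * int :=
  match n with 0 => (1, a 0) | n'.+1 => let u := P2 n' in (u.2, a n'.+1 * u.2 + u.1) end.
Definition P n := (P2 n).1.
Definition Rs n : R := \prod_(i < n) (x i.+1)^-1.

Lemma Q0 : Q 0 = 0%N. Proof. by []. Qed.
Lemma Q1 : Q 1 = 1%N. Proof. by []. Qed.
Lemma QSS n : Q n.+2 = (`|a n.+1| * Q n.+1 + Q n)%N. Proof. by []. Qed.
Lemma P0 : P 0 = 1. Proof. by []. Qed.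
Lemma P1 : P 1 = a 0. Proof. by []. Qed.
Lemma PSS n : P n.+2 = a n.+1 * P n.+1 + P n. Proof. by []. Qed.
Lemma RsS n : Rs n.+1 = Rs n * (x n.+1)^-1.
Proof. by rewrite /Rs big_ord_recr. Qed.
Lemma Rs0 : Rs 0 = 1. Proof. by rewrite /Rs big_ord0. Qed.

Lemma QSSr n : (Q n.+2)%:R = (a n.+1)%:~R * (Q n.+1)%:R + (Q n)%:R :> R.
Proof.
rewrite QSS natrD natrM natr_absz ger0_norm //.
by apply: le_trans (a_ge1 n).
Qed.

Lemma x_neq0 k : x k.+1 != 0.
Proof. by rewrite gt_eqF // (lt_trans _ (x_gt1 k)). Qed.

Lemma RsSS n : Rs n - (a n.+1)%:~R * Rs n.+1 = Rs n.+2.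
Proof.
rewrite (RsS n.+1) -(fracx n.+1) /Defs.frac -/(a n.+1) RsS.
have := x_neq0 n; move: (x n.+1) ((a n.+1)%:~R) (Rs n) => y b r hy.
by rewrite mulrBr divfK // mulrC.
Qed.

Lemma err n : (Q n)%:R * alpha - (P n)%:~R = (-1)^+n.+1 * Rs n.
Proof.
suff H : forall n, (Q n)%:R * alpha - (P n)%:~R = (-1)^+n.+1 * Rs n /\
   (Q n.+1)%:R * alpha - (P n.+1)%:~R = (-1)^+n.+2 * Rs n.+1 by case: (H n).
elim=> [|m [IH1 IH2]].
  split.
    by rewrite Q0 P0 Rs0 mul0r sub0r mulr1 expr1 mulr1z.
  by rewrite Q1 P1 RsS Rs0 -fracx mul1r mul1r /Defs.frac expr2 mulrNN mulr1 mul1r.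
split=> //.
have E1 : (P m.+1)%:~R = (Q m.+1)%:R * alpha - (-1)^+m.+2 * Rs m.+1 :> R.
  by rewrite -IH2 opprB addrC subrK.
have E2 : (P m)%:~R = (Q m)%:R * alpha - (-1)^+m.+1 * Rs m :> R.
  by rewrite -IH1 opprB addrC subrK.
rewrite QSSr PSS intrD intrM -RsSS E1 E2 !exprS.
move: ((a m.+1)%:~R : R) ((Q m.+1)%:R : R) ((Q m)%:R : R) (Rs m) (Rs m.+1) ((-1)^+m : R) => A B C D E F.
exact: ring_aux1.
Qed.

Lemma invar n : (Q n.+1)%:R * Rs n + (Q n)%:R * Rs n.+1 = 1 :> R.
Proof.
elim: n => [|n IH]; first by rewrite Q1 Q0 Rs0 mul1r mul0r addr0.
by rewrite QSSr -RsSS ring_aux2.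
Qed.

Lemma Rs_gt0 n : 0 < Rs n.
Proof.
elim: n => [|n IH]; first by rewrite Rs0.
by rewrite RsS mulr_gt0 // invr_gt0 (lt_trans _ (x_gt1 n)).
Qed.

Lemma Rs_decr n : Rs n.+1 < Rs n.
Proof.
rewrite RsS -{2}[Rs n]mulr1 ltr_pM2l ?Rs_gt0 //.
by rewrite invf_lt1 ?x_gt1 // (lt_trans _ (x_gt1 n)).
Qed.

Lemma Rs_lt1 n : Rs n.+1 < 1.
Proof.
elim: n => [|n IH]; first by rewrite -Rs0 Rs_decr.
exact: lt_trans (Rs_decr _) IH.
Qed.

Lemma absa_ge1 k : (1 <= `|a k.+1|)%N.
Proof.
have := a_ge1 k; lia.
Qed.

Lemma Q_mono n : (Q n <= Q n.+1)%N.
Proof.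
case: n => [//|n]. rewrite QSS.
apply: leq_trans (leq_addr _ _). by rewrite leq_pmull ?absa_ge1.
Qed.

Lemma Q_ge1 n : (1 <= Q n.+1)%N.
Proof. elim: n => [//|n IH]; exact: leq_trans IH (Q_mono _). Qed.

Lemma Q_grow n : (2 * Q n <= Q n.+2)%N.
Proof.
rewrite QSS mul2n -addnn leq_add2r.
apply: leq_trans (Q_mono n) _. by rewrite leq_pmull ?absa_ge1.
Qed.

Lemma Q_pow j : (2 ^ j <= Q j.*2.+1)%N.
Proof.
elim: j => [//|j IH]. rewrite expnS doubleS.
exact: leq_trans (leq_mul (leqnn 2) IH) (Q_grow _).
Qed.

Lemma key n : (Q n.+2)%:R * Rs n.+1 < 1 :> R.
Proof.
have H := invar n.+1.
have H2 : 0 < (Q n.+1)%:R * Rs n.+2 :> R by rewrite mulr_gt0 ?Rs_gt0 // ltr0n Q_ge1.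
by rewrite -[X in _ < X]H ltrDl.
Qed.

Lemma err_odd j : (Q j.*2.+1)%:R * alpha = (P j.*2.+1)%:~R + Rs j.*2.+1.
Proof.
have := err j.*2.+1; rewrite -addn2 exprD -mul2n exprM sqrrN !expr1n mulr1 mul1r => <-.
by rewrite addrC subrK.
Qed.

Lemma a_le_sum (B : R) m :
  (forall m : nat, (1 <= m)%N ->
    \sum_(1 <= i < m.+1) (pq alpha i)%:~R <= B * m%:R) ->
  (a m.+1)%:~R <= B * (m.+1)%:R.
Proof.
move=> hB; apply: le_trans (hB m.+1 isT).
rewrite big_nat_recr //= lerDr big_nat_cond sumr_ge0 // => i /andP [/andP [hi _] _].
case: i hi => [//|i] _.
by rewrite ler0z (le_trans _ (a_ge1 i)).
Qed.

Lemma approx (B : R) M :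
  (forall m : nat, (1 <= m)%N ->
    \sum_(1 <= i < m.+1) (pq alpha i)%:~R <= B * m%:R) ->
  (1 <= M)%N ->
  exists h (p : int) (e : R) j, [/\ (1 <= h <= M)%N, h%:R * alpha = p%:~R + e,
     0 < e < 1, (2 ^ j <= M)%N & e * M%:R < B * (j.*2.+2)%:R + 1].
Proof.
move=> hB hM.
have exP : exists i, (fun j => Q j.*2.+1 <= M)%N i by exists 0%N.
have ubP : forall i, (fun j => Q j.*2.+1 <= M)%N i -> (i <= M)%N.
  move=> i /= hi; apply: ltnW; apply: leq_trans (ltn_expl _ (isT : 1 < 2)%N) _.
  exact: leq_trans (Q_pow i) hi.
case: (ex_maxnP exP ubP) => j hj hmax.
have hMlt : (M < Q j.*2.+3)%N.
  rewrite ltnNge; apply/negP => h.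
  by have := hmax j.+1 h; rewrite ltnn.
exists (Q j.*2.+1), (P j.*2.+1), (Rs j.*2.+1), j; split.
- by rewrite Q_ge1 hj.
- exact: err_odd.
- by rewrite Rs_gt0 Rs_lt1.
- exact: leq_trans (Q_pow j) hj.
have h1 : (Q j.*2.+3 <= (`|a j.*2.+2| + 1) * Q j.*2.+2)%N.
  by rewrite QSS mulnDl mul1n leq_add2l Q_mono.
have h2 : (`|a j.*2.+2|)%:R = (a j.*2.+2)%:~R :> R.
  by rewrite natr_absz ger0_norm // (le_trans _ (a_ge1 _)).
have e0 := Rs_gt0 j.*2.+1.
have hk := key j.*2.
apply: (@lt_le_trans _ _ (Rs j.*2.+1 * ((`|a j.*2.+2| + 1) * Q j.*2.+2)%:R)).
  rewrite ltr_pM2l // ltr_nat. exact: leq_trans hMlt h1.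
rewrite natrM natrD h2 mulrCA.
have hA := a_le_sum j.*2.+1 hB.
have hA1 : 0 <= (a j.*2.+2)%:~R + 1 :> R.
  by rewrite addr_ge0 // ler0z (le_trans _ (a_ge1 _)).
apply: le_trans (_ : _ <= (a j.*2.+2)%:~R + 1) _.
  by rewrite ler_piMr // ltW // mulrC.
by rewrite lerD2r.
Qed.

End CF.
Section Comb.
Variable R : realType.
Variable alpha : R.
Local Notation frac := (@Defs.frac R).

Lemma Bal_le k : (Bal alpha k <= k)%N.
Proof. by rewrite /Bal (leq_trans (count_size _ _)) // size_iota. Qed.

Lemma Bal_ge1 k : (1 <= k)%N -> (1 <= Bal alpha k)%N.
Proof.
move=> hk; rewrite /Bal -has_count; apply/hasP; exists k => //.
by rewrite mem_iota hk /= add1n ltnSn.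
Qed.

Lemma Bal_lt k k' : (k < k')%N -> frac (k%:R * alpha) < frac (k'%:R * alpha) ->
  (Bal alpha k < Bal alpha k')%N.
Proof.
move=> hkk hf.
have hk' : k' = (k + (k' - k))%N by rewrite subnKC // ltnW.
rewrite /Bal [in iota 1 k']hk' iotaD count_cat.
rewrite -addn1 leq_add //.
  by apply: sub_count => q /= hq; exact: le_trans hq (ltW hf).
rewrite -has_count; apply/hasP; exists k' => //.
rewrite mem_iota; apply/andP; split; lia.
Qed.

Lemma card_lower (f : nat -> nat) J n :
  (forall i, (1 <= i <= J)%N -> inA alpha (f i) /\ (1 <= f i <= n)%N) ->
  (forall i i', (1 <= i)%N -> (i < i')%N -> (i' <= J)%N -> (f i < f i')%N) ->
  (J <= cardA_upto alpha n)%N.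
Proof.
move=> hf hmono.
pose g (i : 'I_J) : 'I_n.+1 := inord (f i.+1).
have hg : injective g.
  have hb : forall i : 'I_J, (f i.+1 < n.+1)%N.
    by move=> i; have [_ /andP [_ h]] := hf i.+1 (ltn_ord i); rewrite ltnS.
  move=> i i' /(congr1 val); rewrite /g /= !inordK ?hb //.
  move=> he; apply/val_inj => /=.
  case: (ltngtP i i') => // hii.
    by have := hmono i.+1 i'.+1 isT hii (ltn_ord i'); rewrite he ltnn.
  by have := hmono i'.+1 i.+1 isT hii (ltn_ord i); rewrite he ltnn.
rewrite /cardA_upto.
have -> : J = #|g @: [set: 'I_J]| by rewrite card_imset // cardsT card_ord.
apply: subset_leq_card; apply/fintype.subsetP => _ /imsetP [i _ ->].
have [hA /andP [h1 h2]] := hf i.+1 (ltn_ord i).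
have e : \val (inord (f i.+1) : 'I_n.+1) = f i.+1 by rewrite /= inordK // ltnS.
rewrite inE /g e h1 /=; exact: (asboolT hA).
Qed.

Lemma frac_shift (z : int) (y : R) : 0 <= y < 1 -> frac (z%:~R + y) = y.
Proof.
move=> /andP [h0 h1].
rewrite /Defs.frac (@floor_def _ _ z).
  by rewrite addrC addKr.
by rewrite intrD lerDl h0 /= ltrD2l.
Qed.

Lemma progression h (p : int) (e : R) J n :
  (1 <= h)%N -> h%:R * alpha = p%:~R + e -> 0 < e -> J%:R * e < 1 -> (J * h <= n)%N ->
  (J <= cardA_upto alpha n)%N.
Proof.
move=> hh he e0 hJ hn.
have hfr : forall i, (i <= J)%N -> frac ((i * h)%N%:R * alpha) = i%:R * e.
  move=> i hi.
  have -> : (i * h)%N%:R * alpha = (i%:Z * p)%:~R + i%:R * e.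
    by rewrite natrM -mulrA he mulrDr intrM.
  apply: frac_shift; rewrite mulr_ge0 ?(ltW e0) //=.
  by apply: le_lt_trans (hJ); rewrite (ler_pM2r e0) ler_nat.
apply: (@card_lower (fun i => Bal alpha (i * h)) J n).
  move=> i /andP [hi1 hi2]; split.
    by exists (i * h)%N; split => //; rewrite muln_gt0 hi1.
  rewrite Bal_ge1 ?muln_gt0 ?hi1 //=.
  apply: leq_trans (Bal_le _) _; apply: leq_trans hn; by rewrite leq_mul2r hi2 orbT.
move=> i i' hi hii' hi'.
apply: Bal_lt; first by rewrite ltn_mul2r hii' andbT.
rewrite !hfr // ?(ltnW (leq_trans hii' hi')) //.
by rewrite (ltr_pM2r e0) ltr_nat.
Qed.

End Comb.
Section An.
Variable R : realType.

Lemma ln2_ge : 1 / 2 <= ln (2 : R).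
Proof.
have h := expR_ge1Dx (- (1 / 2) : R).
have h2 : expR (1 / 2 : R) <= 2.
  rewrite expRN in h.
  have hp := expR_gt0 (1 / 2 : R).
  have h3 : expR (1 / 2 : R) * (1 - 1/2) <= expR (1/2) * (expR (1/2))^-1.
    by rewrite ler_pM2l.
  rewrite mulfV ?gt_eqF // in h3.
  move: (expR (1/2 : R)) h3 => E h3; lra.
rewrite -[X in X <= _](expRK (1/2 : R)) ler_ln // posrE ?expR_gt0 //.
Qed.

Lemma j_le_ln (j M : nat) : (2 ^ j <= M)%N -> j%:R <= 2 * ln (M%:R : R).
Proof.
move=> h.
have hM : (0 < M)%N by apply: leq_trans h; rewrite expn_gt0.
have H : ln ((2 ^ j)%N%:R : R) <= ln M%:R.
  by rewrite ler_ln ?posrE ?ltr0n ?expn_gt0 // ler_nat.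
have e : ((2 ^ j)%N%:R : R) = (2:R) ^+ j by rewrite natrX.
rewrite e lnXn // in H.
have {}H : ln (2:R) * j%:R <= ln M%:R by rewrite mulr_natr.
have := ln2_ge; move: (ln (2:R)) H => l H H2.
have hj : 0 <= j%:R :> R by [].
move: (j%:R : R) (ln (M%:R : R)) hj H => J LM hj H; nra.
Qed.

Lemma ln_le_sqrt (x : R) : 0 < x -> ln x <= 2 * Num.sqrt x.
Proof.
move=> hx.
have hs : 0 < Num.sqrt x by rewrite sqrtr_gt0.
have -> : ln x = 2 * ln (Num.sqrt x).
  rewrite -{1}(sqr_sqrtr (ltW hx)) expr2 lnM ?posrE //; lra.
have := ln_sublinear hs; lra.
Qed.

Lemma floor_nat (y : R) : 0 <= y -> exists m : nat, m%:R <= y < m%:R + 1.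
Proof.
move=> hy; exists `|Num.floor y|%N.
rewrite natr_absz ger0_norm ?Num.Theory.floor_ge0 //.
rewrite Num.Theory.floor_le /=.
by have := Num.Theory.floorD1_gt y; rewrite intrD.
Qed.

End An.

Theorem mainTheorem18 (R : realType) (alpha : R) :
  irrational alpha -> pq_bounded_in_average alpha ->
  exists c : R, 0 < c /\ exists N : nat, forall n : nat, (N <= n)%N ->
    c * Num.sqrt (n%:R / ln (n%:R : R)) <= (cardA_upto alpha n)%:R.
Proof.
move=> irr [B hB].
have B1 : 1 <= B.
  have h1 := a_le_sum irr 0 hB; have h2 := a_ge1 irr 0.
  rewrite mulr1 in h1; apply: le_trans h1.
  by rewrite ler1z.
pose K := 6 * B + 1.
have K1 : 1 <= K by rewrite /K; lra.
have K0 : 0 < K by lra.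
exists (1 / (2 * K)); split; first by rewrite divr_gt0 //; lra.
pose N := (`|Num.ceil (1024 * K ^+ 4)| + 8)%N.
exists N => n hn.
have hn8 : 8 <= n%:R :> R.
  by rewrite (ler_nat R 8); apply: leq_trans hn; rewrite leq_addl.
have hnK : 1024 * K ^+ 4 <= n%:R.
  apply: le_trans (Num.Theory.ceil_ge _) _.
  apply: le_trans (ler_norm _) _.
  rewrite -intr_norm -natr_absz ler_nat.
  by apply: leq_trans hn; rewrite leq_addr.
have hn0 : 0 < n%:R :> R by lra.
set L := ln (n%:R : R).
have L1 : 1 <= L.
  have h8 : ln (8 : R) <= L by rewrite ler_ln ?posrE //; lra.
  have e8 : (8 : R) = 2 ^+ 3 by rewrite !exprS expr0; lra.
  rewrite e8 lnXn // in h8.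
  have := ln2_ge R; move: (ln (2:R)) h8 => l h8 hl.
  rewrite -mulr_natr in h8; lra.
have LnS := ln_le_sqrt hn0.
have Lln : L < n%:R := ln_sublinear hn0.
set s := Num.sqrt (n%:R / L).
have s0 : 0 <= s := sqrtr_ge0 _.
have L0 : 0 < L by lra.
have s2 : s ^+ 2 = n%:R / L by rewrite sqr_sqrtr // divr_ge0 // ltW.
have sqn : 32 * K ^+ 2 <= Num.sqrt n%:R.
  rewrite -(ger0_norm (_ : 0 <= 32 * K ^+ 2)); last by rewrite mulr_ge0 ?sqr_ge0.
  rewrite -sqrtr_sqr ler_sqrt; last by lra.
  by rewrite exprMn -exprM; apply: le_trans hnK; rewrite -[(32:R)^+2]/(32*32); lra.
have sL : s ^+ 2 * L = n%:R by rewrite s2 divfK // gt_eqF.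
have rr : Num.sqrt (n%:R : R) ^+ 2 = n%:R by rewrite sqr_sqrtr // ltW.
have s4K : 4 * K <= s.
  move: (Num.sqrt (n%:R : R)) sqn LnS rr => r sqn LnS rr.
  have r0 : 0 < r by apply: lt_le_trans sqn; rewrite mulr_gt0 // exprn_gt0.
  have hs2 : r <= 2 * s ^+ 2.
    have h1 : s ^+ 2 * L <= s ^+ 2 * (2 * r) by rewrite ler_wpM2l ?sqr_ge0.
    have h2 : r * r <= (2 * s ^+ 2) * r.
      rewrite -expr2 rr -sL; move: h1; move: (s ^+ 2) => S h1; nra.
    by rewrite -(ler_pM2r r0).
  have : 16 * K ^+ 2 <= s ^+ 2 by lra.
  move=> h; rewrite expr2 in h; nra.
have LnS' : L <= 2 * Num.sqrt (n%:R : R) by [].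
set t := s * L.
have t1 : 1 <= t by rewrite /t; nra.
have t2 : t * t = n%:R * L by rewrite /t -sL; ring.
have tn : t <= n%:R.
  have : t * t <= n%:R * n%:R by rewrite t2 ler_pM2l // ltW.
  nra.
have [M /andP [Mt tM]] := floor_nat (le_trans ler01 t1).
have M1 : (0 < M)%N by rewrite -(ltr_nat R); lra.
have Mn : (M <= n)%N by rewrite -(ler_nat R); lra.
have [h [p [e [j [/andP [h1 hM] he /andP [e0 e1] hj heM]]]]] := approx irr hB M1.
have jL : j%:R <= 2 * L.
  apply: le_trans (@j_le_ln R j M hj) _; rewrite ler_pM2l // ler_ln ?posrE ?ltr0n ?ler_nat //.
  by apply: leq_trans Mn.
have eMK : e * M%:R < K * L.
  apply: lt_le_trans heM _.
  have hj2 : (j.*2.+2)%:R = 2 * j%:R + 2 :> R by rewrite -addn2 natrD -muln2 natrM; lra.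
  rewrite hj2 /K; nra.
have KL0 : 0 < K * L by rewrite mulr_gt0.
have [J2 /andP [J2a J2b]] := floor_nat (divr_ge0 (ler0n R M) (ltW KL0)).
rewrite ler_pdivlMr // in J2a.
rewrite ltr_pdivrMr // in J2b.
pose J1 := (n %/ M)%N.
have J1b : n%:R < (J1 + 1)%:R * M%:R :> R.
  by rewrite -natrM ltr_nat addn1; apply: ltn_ceil.
pose J := minn J1 J2.
have hJh : (J * h <= n)%N.
  apply: leq_trans (leq_mul (geq_minl J1 J2) hM) _; exact: leq_trunc_div.
have hJe : J%:R * e < 1.
  have JJ2 : J%:R <= J2%:R :> R by rewrite ler_nat geq_minr.
  have : J%:R * e * (K * L) < 1 * (K * L).
    rewrite mul1r; apply: le_lt_trans eMK.
    rewrite mulrAC [e * _]mulrC; apply: ler_wpM2r; first exact: ltW.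
    exact: le_trans (ler_wpM2r (ltW KL0) JJ2) J2a.
  by rewrite ltr_pM2r.
have hcard := progression h1 he e0 hJe hJh.
have st : s * t = n%:R by rewrite /t mulrA -expr2.
have hJ1 : s / (2 * K) <= J1%:R.
  have : s < (J1 + 1)%:R.
    rewrite -(ltr_pM2r (lt_le_trans ltr01 t1)) st.
    apply: lt_le_trans J1b _; rewrite ler_wpM2l //.
  rewrite natrD => h0.
  rewrite ler_pdivrMr ?mulr_gt0 //; nra.
have hJ2 : s / (2 * K) <= J2%:R.
  have h3 : s * L - L < (J2%:R + 1) * K * L by rewrite /t in Mt tM; nra.
  have h4 : s - 1 < (J2%:R + 1) * K.
    by rewrite -(ltr_pM2r L0) mulrBl mul1r.
  rewrite ler_pdivrMr ?mulr_gt0 //; nra.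
have hJ : s / (2 * K) <= J%:R.
  by rewrite /J; case: (leqP J1 J2) => _ .
apply: le_trans (_ : J%:R <= _); last by rewrite ler_nat.
by rewrite mulrC mulrA mulr1.
Qed.
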